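(* Let $F$ be a connected, compact, simple Lie group and $m\ge 2$. An $F^m$-invariant Riemannian metric on the Ledger--Obata space $F^m/\mathrm{diag}(F)$ is naturally reductive if and only if it is generated by a pair $(\mathfrak{p},(\cdot,\cdot))$ such that one of the following holds: (a) $\mathfrak{p}$ is an ideal of $\mathfrak{g}$ isomorphic to $(m-1)\mathfrak{f}$ (i.e. the direct sum of $m-1$ of the $m$ simple summands $\mathfrak f$ of $\mathfrak g$) and $(\cdot,\cdot)$ is an $\mathrm{ad}(\mathfrak{p})$-invariant inner product on it, so that $(\cdot,\cdot)=\sum_{i}\beta_i\langle\cdot,\cdot\rangle_i$, the sum running over the $m-1$ summands contained in $\mathfrak p$, with all $\beta_i>0$; or (b) there is an $\mathrm{ad}(\mathfrak{g})$-invariant quadratic form $Q=\sum_{i=1}^m\alpha_i\langle\cdot,\cdot\rangle_i$ on $\mathfrak{g}$ with all $\alpha_i\neq 0$, such that $\mathfrak{p}$ is the $Q$-orthogonal complement of $\mathfrak{h}=\mathrm{diag}(\mathfrak f)$ in $\mathfrak{g}$ and $(\cdot,\cdot)=Q|_{\mathfrak p}$, where either (i) $\alpha_i>0$ for all $i=1,\dots,m$, or (ii) there is $j\in\{1,\dots,m\}$ with $\alpha_j<0$, $\alpha_i>0$ for all $i\neq j$, and $S:=\sum_{i=1}^m\alpha_i<0$.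
   Context: $F$ is a connected compact simple Lie group with Lie algebra $\mathfrak f$; $G=F^m$, $H=\mathrm{diag}(F)=\{(x,\dots,x):x\in F\}$, $\mathfrak g=m\mathfrak f=\mathfrak f\oplus\cdots\oplus\mathfrak f$, $\mathfrak h=\mathrm{diag}(\mathfrak f)=\{(X,\dots,X):X\in\mathfrak f\}$. $\langle\cdot,\cdot\rangle$ denotes minus the Killing form of $\mathfrak g$ and $\langle\cdot,\cdot\rangle_i$ its restriction to the $i$-th copy of $\mathfrak f$ (extended by zero on the other summands). An $F^m$-invariant metric on $G/H$ corresponds to an $\mathrm{Ad}(H)$-invariant inner product $(\cdot,\cdot)$ on an $\mathrm{Ad}(H)$-invariant complement $\mathfrak p$ of $\mathfrak h$ in $\mathfrak g$ (identified with the tangent space at $eH$). Such a metric is naturally reductive if the $\mathrm{Ad}(H)$-invariant complement $\mathfrak p$ can be chosen so that $([X,Y]_{\mathfrak p},X)=0$ for all $X,Y\in\mathfrak p$, where $[X,Y]_{\mathfrak p}$ is the $\mathfrak p$-component with respect to $\mathfrak g=\mathfrak h\oplus\mathfrak p$; the metric is then said to be generated by the pair $(\mathfrak p,(\cdot,\cdot))$. *)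

(* Defs.v *)
From HB Require Import structures.
From mathcomp Require Import all_boot all_order all_algebra.
Set Implicit Arguments. Unset Strict Implicit. Unset Printing Implicit Defensive.
Import Order.TTheory GRing.Theory Num.Theory.
Local Open Scope ring_scope.

Section LO.
Variable R : rcfType.

Definition vtrace (V : vectType R) (h : V -> V) : R :=
  \sum_(i < \dim (fullv : {vspace V}))
     coord (vbasis fullv) i (h (tnth (vbasis (fullv : {vspace V})) i)).

Definition mkilling (V : vectType R) (br : V -> V -> V) (x y : V) : R :=
  - vtrace (fun z => br x (br y z)).

(* f = (fT, br) is a real Lie algebra which is compact (negative definite
   Killing form) and simple (non-abelian, no non-trivial ideals). *)
Definition compact_simple_lie (fT : vectType R) (br : fT -> fT -> fT) : Prop :=
  (forall a x y z, br (a *: x + y) z = a *: br x z + br y z) /\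
      (forall a x y z, br z (a *: x + y) = a *: br z x + br z y) /\
      (forall x, br x x = 0) /\
      (forall x y z, br x (br y z) + br y (br z x) + br z (br x y) = 0) /\
      (forall x, x != 0 -> 0 < mkilling br x x) /\
      (exists x y, br x y != 0) /\
      (forall I : {vspace fT},
          (forall x y, y \in I -> br x y \in I) -> I = 0%VS \/ I = fullv).

Variables (fT : vectType R) (m : nat).

Definition gT := {ffun 'I_m -> fT}.

Definition gbr (br : fT -> fT -> fT) (X Y : gT) : gT := [ffun i => br (X i) (Y i)].

Definition gkil (br : fT -> fT -> fT) (X Y : gT) : R := mkilling (gbr br) X Y.

Definition gproj (i : 'I_m) (X : gT) : gT :=
  [ffun k => if k == i then X i else 0].

Definition gkil_i (br : fT -> fT -> fT) (i : 'I_m) (X Y : gT) : R :=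
  gkil br (gproj i X) (gproj i Y).

Definition diagf (x : fT) : gT := [ffun _ => x].
Definition hsp : {vspace gT} := limg (linfun diagf).

(* (p, ip) is an Ad(H)-invariant complement of h with an Ad(H)-invariant
   inner product on it, i.e. it defines an F^m-invariant metric on G/H. *)
Definition metric_pair (br : fT -> fT -> fT) (p : {vspace gT})
    (ip : gT -> gT -> R) : Prop :=
  (p + hsp)%VS = fullv /\ (p :&: hsp)%VS = 0%VS /\
      (forall Z X, Z \in hsp -> X \in p -> gbr br Z X \in p) /\
      (forall X Y, X \in p -> Y \in p -> ip X Y = ip Y X) /\
      (forall a X Y Z, X \in p -> Y \in p -> Z \in p ->
          ip (a *: X + Y) Z = a * ip X Z + ip Y Z) /\
      (forall X, X \in p -> X != 0 -> 0 < ip X X) /\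
      (forall Z X Y, Z \in hsp -> X \in p -> Y \in p ->
          ip (gbr br Z X) Y + ip X (gbr br Z Y) = 0).

(* two pairs define the same metric on G/H (tangent space g/h) *)
Definition same_metric (p : {vspace gT}) (ip : gT -> gT -> R)
    (p' : {vspace gT}) (ip' : gT -> gT -> R) : Prop :=
  forall X Y X' Y', X \in p -> Y \in p -> X' \in p' -> Y' \in p' ->
    X' - X \in hsp -> Y' - Y \in hsp -> ip' X' Y' = ip X Y.

(* ([X,Y]_p, X) = 0 for all X, Y in p, where [X,Y]_p is the p-component
   of [X,Y] with respect to g = h + p *)
Definition nat_red_pair (br : fT -> fT -> fT) (p : {vspace gT})
    (ip : gT -> gT -> R) : Prop :=
  forall X Y W, X \in p -> Y \in p -> W \in p ->
    gbr br X Y - W \in hsp -> ip W X = 0.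

Definition naturally_reductive (br : fT -> fT -> fT) (p0 : {vspace gT})
    (ip0 : gT -> gT -> R) : Prop :=
  exists (p : {vspace gT}) (ip : gT -> gT -> R),
    [/\ metric_pair br p ip, same_metric p0 ip0 p ip & nat_red_pair br p ip].

Definition case_a (br : fT -> fT -> fT) (p : {vspace gT})
    (ip : gT -> gT -> R) : Prop :=
  exists (j : 'I_m) (beta : 'I_m -> R),
    [/\ (forall X, (X \in p) = (X j == 0)),
        (forall i, i != j -> 0 < beta i) &
        (forall X Y, X \in p -> Y \in p ->
           ip X Y = \sum_(i < m | i != j) beta i * gkil_i br i X Y)].

Definition Qform (br : fT -> fT -> fT) (alpha : 'I_m -> R) (X Y : gT) : R :=
  \sum_(i < m) alpha i * gkil_i br i X Y.

Definition case_b (br : fT -> fT -> fT) (p : {vspace gT})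
    (ip : gT -> gT -> R) : Prop :=
  exists alpha : 'I_m -> R,
    [/\ (forall i, alpha i != 0),
        (forall X, X \in p <-> (forall Z, Z \in hsp -> Qform br alpha X Z = 0)),
        (forall X Y, X \in p -> Y \in p -> ip X Y = Qform br alpha X Y) &
        ((forall i, 0 < alpha i) \/
         (exists j, [/\ alpha j < 0, (forall i, i != j -> 0 < alpha i) &
                        \sum_(i < m) alpha i < 0]))].

End LO.

(* Main.v *)
Require Import Defs.
From HB Require Import structures.
From mathcomp Require Import all_boot all_order all_algebra.
From mathcomp Require Import complex.
From mathcomp Require Import ring lra.
Set Implicit Arguments. Unset Strict Implicit. Unset Printing Implicit Defensive.
Import Order.TTheory GRing.Theory Num.Theory.
Local Open Scope ring_scope.
Section Lw.
Variables (R : fieldType) (V W : vectType R) (f : V -> W).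
Hypothesis Hf : forall a x y, f (a *: x + y) = a *: f x + f y.
Definition lw := f.
Lemma lw_lin : linear lw. Proof. by move=> a x y; apply: Hf. Qed.
HB.instance Definition _ := GRing.isLinear.Build R V W *:%R lw lw_lin.
Lemma linfunP v : linfun f v = f v.
Proof. exact: (lfunE lw). Qed.
Lemma lin_sum (I : finType) (c : I -> R) (F : I -> V) :
  f (\sum_i c i *: F i) = \sum_i c i *: f (F i).
Proof. rewrite -/(lw _) linear_sum; apply: eq_bigr => i _; by rewrite linearZ. Qed.
Lemma lin0 : f 0 = 0. Proof. by rewrite -/(lw _) linear0. Qed.
Lemma linD x y : f (x + y) = f x + f y. Proof. by rewrite -/(lw _) linearD. Qed.
Lemma linZ a x : f (a *: x) = a *: f x. Proof. by rewrite -/(lw _) linearZ. Qed.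
Lemma linN x : f (- x) = - f x. Proof. by rewrite -/(lw _) linearN. Qed.
Lemma linB x y : f (x - y) = f x - f y. Proof. by rewrite -/(lw _) linearB. Qed.
Lemma linsum (I : finType) (F : I -> V) :
  f (\sum_i F i) = \sum_i f (F i).
Proof. by rewrite -/(lw _) linear_sum. Qed.
End Lw.

Definition islin (R : fieldType) (V W : vectType R) (f : V -> W) :=
  forall a x y, f (a *: x + y) = a *: f x + f y.

Section Trace.
Variable R : rcfType.

Lemma vtrace_ext (V : vectType R) (h k : V -> V) : h =1 k -> vtrace h = vtrace k.
Proof. by move=> e; rewrite /vtrace; apply: eq_bigr => i _; rewrite e. Qed.

Lemma vtraceL (V : vectType R) (a : R) (h k : V -> V) :
  vtrace (fun z => a *: h z + k z) = a * vtrace h + vtrace k.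
Proof.
rewrite /vtrace mulr_sumr -big_split /=; apply: eq_bigr => i _.
by rewrite linearP.
Qed.

Lemma vtraceN (V : vectType R) (h : V -> V) :
  vtrace (fun z => - h z) = - vtrace h.
Proof.
rewrite -(vtrace_ext (h := fun z => (-1) *: h z + (fun _ => 0) z)); last first.
  by move=> z; rewrite addr0 scaleN1r.
rewrite vtraceL; have -> : vtrace (fun _ : V => 0) = 0.
  by rewrite /vtrace big1 // => i _; exact: linear0.
by rewrite addr0 mulN1r.
Qed.

Lemma vtraceZ (V : vectType R) (a : R) (h : V -> V) :
  vtrace (fun z => a *: h z) = a * vtrace h.
Proof.
rewrite -(vtrace_ext (h := fun z => a *: h z + (fun _ => 0) z)); last first.
  by move=> z; rewrite addr0.
rewrite vtraceL; have -> : vtrace (fun _ : V => 0) = 0.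
  by rewrite /vtrace big1 // => i _; exact: linear0.
by rewrite addr0.
Qed.

Lemma expand (V : vectType R) (v : V) :
  v = \sum_(i < \dim (fullv : {vspace V})) coord (vbasis fullv) i v *: tnth (vbasis fullv) i.
Proof.
by rewrite {1}(coord_vbasis (memvf v)); apply: eq_bigr => i _; rewrite (tnth_nth 0).
Qed.

Lemma vtrace_cyc (V W : vectType R) (A : W -> V) (C : V -> W) :
  islin A -> islin C -> vtrace (fun z => A (C z)) = vtrace (fun z => C (A z)).
Proof.
move=> lA lC; rewrite /vtrace.
have e1 : forall k, A (C (tnth (vbasis (fullv : {vspace V})) k)) =
  \sum_j coord (vbasis (fullv : {vspace W})) j (C (tnth (vbasis fullv) k)) *:
     A (tnth (vbasis (fullv : {vspace W})) j).
  by move=> k; rewrite {1}(expand (C _)) (lin_sum lA).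
have e2 : forall k, C (A (tnth (vbasis (fullv : {vspace W})) k)) =
  \sum_j coord (vbasis (fullv : {vspace V})) j (A (tnth (vbasis fullv) k)) *:
     C (tnth (vbasis (fullv : {vspace V})) j).
  by move=> k; rewrite {1}(expand (A _)) (lin_sum lC).
under eq_bigr => k _ do rewrite e1 linear_sum.
under [in RHS]eq_bigr => k _ do rewrite e2 linear_sum.
rewrite exchange_big /=; apply: eq_bigr => j _; apply: eq_bigr => k _.
by rewrite !linearZ /= mulrC.
Qed.

End Trace.
Section Killing.
Variables (R : rcfType) (V : vectType R) (br : V -> V -> V).
Hypothesis hl : forall a x y z, br (a *: x + y) z = a *: br x z + br y z.
Hypothesis hr : forall a x y z, br z (a *: x + y) = a *: br z x + br z y.
Hypothesis ha : forall x, br x x = 0.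
Hypothesis hjac : forall x y z, br x (br y z) + br y (br z x) + br z (br x y) = 0.

Lemma adlin x : islin (br x). Proof. by move=> a u v; rewrite hr. Qed.
Lemma adllin y : islin (br^~ y). Proof. by move=> a u v; rewrite hl. Qed.
Lemma br0r x : br x 0 = 0. Proof. exact: (lin0 (adlin x)). Qed.
Lemma br0l x : br 0 x = 0. Proof. exact: (lin0 (adllin x)). Qed.
Lemma brDl x y z : br (x + y) z = br x z + br y z. Proof. exact: (linD (adllin z)). Qed.
Lemma brDr x y z : br z (x + y) = br z x + br z y. Proof. exact: (linD (adlin z)). Qed.
Lemma brZl a x z : br (a *: x) z = a *: br x z. Proof. exact: (linZ (adllin z)). Qed.
Lemma brZr a x z : br z (a *: x) = a *: br z x. Proof. exact: (linZ (adlin z)). Qed.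
Lemma brNl x z : br (- x) z = - br x z. Proof. exact: (linN (adllin z)). Qed.
Lemma brNr x z : br z (- x) = - br z x. Proof. exact: (linN (adlin z)). Qed.
Lemma brB x y z : br z (x - y) = br z x - br z y. Proof. exact: (linB (adlin z)). Qed.
Lemma br_anti x y : br x y = - br y x.
Proof.
have := ha (x + y); rewrite brDl !brDr !ha add0r addr0 => /eqP.
by rewrite addr_eq0 => /eqP.
Qed.
Lemma br_jac x y w : br (br x y) w = br x (br y w) - br y (br x w).
Proof.
have H := hjac x y w; rewrite (br_anti w x) brNr (br_anti w (br x y)) in H.
by apply/eqP; rewrite eq_sym -subr_eq0; apply/eqP.
Qed.

Notation B := (mkilling br).

Lemma vtraceB (h k : V -> V) : vtrace (fun z => h z - k z) = vtrace h - vtrace k.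
Proof.
have := vtraceL (-1) k h; rewrite mulN1r addrC => <-.
by apply: vtrace_ext => z; rewrite scaleN1r addrC.
Qed.

Lemma mk_linl a x x' y : B (a *: x + x') y = a * B x y + B x' y.
Proof.
rewrite /mkilling -(vtrace_ext (h := fun z => a *: br x (br y z) + br x' (br y z))).
  by rewrite vtraceL opprD mulrN.
by move=> z; rewrite hl.
Qed.

Lemma mk_sym x y : B x y = B y x.
Proof. by rewrite /mkilling (vtrace_cyc (adlin x) (adlin y)). Qed.

Lemma mk_linr a x x' y : B y (a *: x + x') = a * B y x + B y x'.
Proof. by rewrite !(mk_sym y) mk_linl. Qed.

Lemma mk0l y : B 0 y = 0.
Proof. have := mk_linl 1 0 0 y; rewrite scale1r addr0 mul1r.
by move/(congr1 (fun t => t - B 0 y)); rewrite subrr addrK => <-. Qed.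
Lemma mk0r y : B y 0 = 0. Proof. by rewrite mk_sym mk0l. Qed.
Lemma mkDl x x' y : B (x + x') y = B x y + B x' y.
Proof. by have := mk_linl 1 x x' y; rewrite scale1r mul1r. Qed.
Lemma mkDr x x' y : B y (x + x') = B y x + B y x'.
Proof. by rewrite !(mk_sym y) mkDl. Qed.
Lemma mkZl a x y : B (a *: x) y = a * B x y.
Proof. by have := mk_linl a x 0 y; rewrite addr0 mk0l addr0. Qed.
Lemma mkZr a x y : B y (a *: x) = a * B y x.
Proof. by rewrite !(mk_sym y) mkZl. Qed.
Lemma mkNl x y : B (- x) y = - B x y.
Proof. by rewrite -scaleN1r mkZl mulN1r. Qed.
Lemma mkNr x y : B y (- x) = - B y x.
Proof. by rewrite !(mk_sym y) mkNl. Qed.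

Lemma mk_inv x y z : B (br x y) z = B x (br y z).
Proof.
rewrite /mkilling; congr (- _).
rewrite -(vtrace_ext (h := fun w => br x (br y (br z w)) - br y (br x (br z w)))); last first.
  by move=> w; rewrite br_jac.
rewrite -[RHS](vtrace_ext (h := fun w => br x (br y (br z w)) - br x (br z (br y w)))); last first.
  by move=> w; rewrite br_jac brB.
rewrite !vtraceB; congr (_ - _).
have lC : islin (fun w => br x (br z w)).
  by move=> a u v; rewrite !hr.
exact: (vtrace_cyc (adlin y) lC).
Qed.

Lemma mk_inv2 x y z : B (br z x) y + B x (br z y) = 0.
Proof. by rewrite br_anti mkNl mk_inv addrC subrr. Qed.
End Killing.
Section Coords.
Variables (R : fieldType) (V : vectType R).
Local Notation n := (\dim (fullv : {vspace V})).
Local Notation e := (vbasis (fullv : {vspace V})).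
Definition vec (u : 'rV[R]_n) : V := \sum_i u 0 i *: e`_i.
Lemma coord_vec u j : coord e j (vec u) = u 0 j.
Proof. by rewrite /vec coord_sum_free //; exact: basis_free (vbasisP _). Qed.
Lemma vec_eq0 u : vec u = 0 -> u = 0.
Proof. by move=> h; apply/rowP => j; rewrite mxE -coord_vec h linear0. Qed.
Lemma vecD u u' : vec (u + u') = vec u + vec u'.
Proof. by rewrite /vec -big_split; apply: eq_bigr => i _; rewrite mxE scalerDl. Qed.
Lemma vecZ a u : vec (a *: u) = a *: vec u.
Proof. by rewrite /vec scaler_sumr; apply: eq_bigr => i _; rewrite mxE scalerA. Qed.
Lemma vecB u u' : vec (u - u') = vec u - vec u'.
Proof. by rewrite vecD -scaleN1r vecZ scaleN1r. Qed.
Definition lmx (T : V -> V) : 'M[R]_n := \matrix_(i, j) coord e j (T e`_i).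
Lemma vecT (T : V -> V) u : islin T -> T (vec u) = vec (u *m lmx T).
Proof.
move=> lT; rewrite /vec (lin_sum lT).
under eq_bigr => i _ do rewrite {1}(coord_vbasis (memvf (T e`_i))) scaler_sumr.
rewrite exchange_big /=; apply: eq_bigr => j _.
rewrite mxE scaler_suml; apply: eq_bigr => i _; by rewrite scalerA mxE.
Qed.
End Coords.
Section Schur.
Variables (R : rcfType) (V : vectType R) (br : V -> V -> V).
Hypothesis hl : forall a x y z, br (a *: x + y) z = a *: br x z + br y z.
Hypothesis hr : forall a x y z, br z (a *: x + y) = a *: br z x + br z y.
Hypothesis ha : forall x, br x x = 0.
Hypothesis hjac : forall x y z, br x (br y z) + br y (br z x) + br z (br x y) = 0.
Hypothesis hpos : forall x, x != 0 -> 0 < mkilling br x x.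
Hypothesis hsimple : forall I : {vspace V},
   (forall x y, y \in I -> br x y \in I) -> I = 0%VS \/ I = fullv.

Lemma ker_full (S : V -> V) x0 : islin S -> (forall x y, S (br x y) = br x (S y)) ->
  x0 != 0 -> S x0 = 0 -> forall x, S x = 0.
Proof.
move=> lS cS nz Sx0.
have memK : forall x, (x \in lker (linfun S)) = (S x == 0).
  by move=> x; rewrite memv_ker linfunP.
have hI : forall x y, y \in lker (linfun S) -> br x y \in lker (linfun S).
  by move=> x y; rewrite !memK => /eqP Sy; rewrite cS Sy (br0r hr).
have [K0|Kf] := hsimple hI.
- have : x0 \in lker (linfun S) by rewrite memK Sx0.
  by rewrite K0 memv0 (negPf nz).
- by move=> x; apply/eqP; rewrite -memK Kf memvf.
Qed.

Lemma schur (T : V -> V) : islin T -> (forall x y, T (br x y) = br x (T y)) ->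
  (exists x : V, x != 0) -> exists c, forall x, T x = c *: x.
Proof.
move=> lT cT [x0 nz0].
pose n := \dim (fullv : {vspace V}).
have n_gt0 : (0 < n)%N.
  rewrite lt0n dimv_eq0; apply/eqP => h.
  by move: (memvf x0); rewrite h memv0 (negPf nz0).
pose A := lmx T.
have [z /eigenvalueP [v vA vnz]] := Theorem7' (map_mx (real_complex R) A) n_gt0.
pose a := complex.Re z; pose b := complex.Im z.
pose Q := (A - a%:M) *m (A - a%:M) + (b ^+ 2)%:M.
pose toC := real_complex R.
have v1 : v *m (map_mx toC A - (toC a)%:M) = (z - toC a) *: v.
  by rewrite mulmxBr vA mul_mx_scalar scalerBl.
have vQ : v *m map_mx toC Q = 0.
  rewrite /Q map_mxD map_mxM map_mxB !map_scalar_mx /=.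
  rewrite mulmxDr mulmxA v1 -scalemxAl v1 mul_mx_scalar scalerA -scalerDl.
  have key : forall (w r t i : R[i]), i ^+ 2 = -1 -> w = r + i * t ->
      (w - r) * (w - r) + t ^+ 2 = 0.
    by move=> w r t i hi ->; rewrite -[t ^+ 2]mul1r -[1]opprK -hi; ring.
  by rewrite rmorphXn (key z (toC a) (toC b) 'i%C (sqr_i R) (complexE z)) scale0r.
have dQ : \det Q == 0.
  have : \det (map_mx toC Q) == 0 by apply/det0P; exists v.
  by rewrite det_map_mx fmorph_eq0.
have [u unz uQ] := det0P dQ.
pose S1 := fun w => T w - a *: w.
have lS1 : islin S1.
  by move=> c w w'; rewrite /S1 lT scalerDr scalerBr !scalerA [c * a]mulrC opprD addrACA.
have cS1 : forall x y, S1 (br x y) = br x (S1 y).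
  by move=> x y; rewrite /S1 cT (brB hr) (brZr hr).
have vS1 : forall u', S1 (vec u') = vec (u' *m (A - a%:M)).
  by move=> u'; rewrite /S1 (vecT _ lT) mulmxBr mul_mx_scalar vecB vecZ.
pose S := fun w => S1 (S1 w) + b ^+ 2 *: w.
have lS : islin S.
  by move=> c w w'; rewrite /S !lS1 !scalerDr !scalerA [c * _]mulrC addrACA.
have cS : forall x y, S (br x y) = br x (S y).
  by move=> x y; rewrite /S !cS1 (brDr hr) (brZr hr).
have Sx : S (vec u) = 0.
  rewrite /S !vS1 -vecZ -vecD -mulmxA -mul_mx_scalar -mulmxDr.
  by rewrite -/Q uQ /vec big1 // => i _; rewrite mxE scale0r.
have xnz : vec u != 0 by apply: contra unz => /eqP /vec_eq0 ->.
have S0 := ker_full lS cS xnz Sx.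
have [b0|bnz] := eqVneq b 0.
  have S10 : forall w, S1 (S1 w) = 0.
    by move=> w; have := S0 w; rewrite /S b0 expr0n /= scale0r addr0.
  have S1z : forall w, S1 w = 0.
    have [h0|hn] := eqVneq (S1 x0) 0.
      exact: ker_full lS1 cS1 nz0 h0.
    exact: ker_full lS1 cS1 hn (S10 x0).
  by exists a => w; apply/eqP; rewrite -subr_eq0; apply/eqP; exact: S1z.
exfalso.
have S1S1 : forall w, S1 (S1 w) = - (b ^+ 2 *: w).
  by move=> w; apply/eqP; rewrite -subr_eq0 opprK; apply/eqP; exact: S0.
have brS1 : forall x w, br (S1 x) w = S1 (br x w).
  by move=> x w; rewrite (br_anti hl hr ha) -cS1 -(linN lS1) -(br_anti hl hr ha).
have b2 : 0 < b ^+ 2 by rewrite exprn_even_gt0 //=.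
have ynz : S1 x0 != 0.
  apply/eqP => h; have := S0 x0; rewrite /S h (lin0 lS1) add0r => /eqP.
  by rewrite scaler_eq0 (negPf nz0) orbF => /eqP hb; move: b2; rewrite hb ltxx.
have key : mkilling br (S1 x0) (S1 x0) = - (b ^+ 2 * mkilling br x0 x0).
  rewrite /mkilling mulrN opprK -vtraceZ.
  apply/eqP; rewrite eqr_oppLR -vtraceN; apply/eqP; apply: vtrace_ext => w.
  by rewrite (brS1 x0 w) brS1 -cS1 S1S1.
have := hpos ynz; rewrite key oppr_gt0 => /lt_trans/(_ (mulr_gt0 b2 (hpos nz0))).
by rewrite ltxx.
Qed.
End Schur.
Section Scal.
Variables (R : fieldType) (V : vectType R) (f : V -> R).
Hypothesis Hf : forall a x y, f (a *: x + y) = a * f x + f y.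
Definition sw : V -> R^o := f.
Lemma sw_lin : linear sw. Proof. by move=> a x y; apply: Hf. Qed.
HB.instance Definition _ := GRing.isLinear.Build R V R^o *:%R sw sw_lin.
Lemma slin_sum (I : finType) (c : I -> R) (F : I -> V) :
  f (\sum_i c i *: F i) = \sum_i c i * f (F i).
Proof. rewrite -/(sw _) linear_sum; apply: eq_bigr => i _; by rewrite linearZ. Qed.
Lemma slin_sum1 (I : finType) (F : I -> V) :
  f (\sum_i F i) = \sum_i f (F i).
Proof. by rewrite -/(sw _) linear_sum. Qed.
Lemma slin0 : f 0 = 0. Proof. by rewrite -/(sw _) linear0. Qed.
Lemma slinD x y : f (x + y) = f x + f y. Proof. by rewrite -/(sw _) linearD. Qed.
Lemma slinZ a x : f (a *: x) = a * f x. Proof. by rewrite -/(sw _) linearZ. Qed.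
Lemma slinN x : f (- x) = - f x. Proof. by rewrite -/(sw _) linearN. Qed.
Lemma slinB x y : f (x - y) = f x - f y. Proof. by rewrite -/(sw _) linearB. Qed.
End Scal.

Section Riesz.
Variables (R : rcfType) (V : vectType R) (br : V -> V -> V).
Hypothesis hl : forall a x y z, br (a *: x + y) z = a *: br x z + br y z.
Hypothesis hr : forall a x y z, br z (a *: x + y) = a *: br z x + br z y.
Hypothesis ha : forall x, br x x = 0.
Hypothesis hjac : forall x y z, br x (br y z) + br y (br z x) + br z (br x y) = 0.
Hypothesis hpos : forall x, x != 0 -> 0 < mkilling br x x.
Hypothesis hsimple : forall I : {vspace V},
   (forall x y, y \in I -> br x y \in I) -> I = 0%VS \/ I = fullv.
Local Notation B := (mkilling br).
Local Notation n := (\dim (fullv : {vspace V})).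
Local Notation e := (vbasis (fullv : {vspace V})).

Lemma B_nondeg x : (forall y, B x y = 0) -> x = 0.
Proof.
move=> h; apply/eqP; apply: contraT => nz; have := hpos nz.
by rewrite h ltxx.
Qed.

Lemma BlinL y : forall a x x', B (a *: x + x') y = a * B x y + B x' y.
Proof. by move=> a x x'; apply: (mk_linl hl). Qed.
Lemma BlinR y : forall a x x', B y (a *: x + x') = a * B y x + B y x'.
Proof. by move=> a x x'; apply: (mk_linr hl hr). Qed.

Definition gram : 'M[R]_n := \matrix_(k, l) B e`_k e`_l.

Lemma B_vec u y : B (vec u) y = \sum_k u 0 k * B e`_k y.
Proof. by rewrite /vec (slin_sum (BlinL y)). Qed.

Lemma B_vec_e u (l : 'I_n) : B (vec u) e`_l = (u *m gram) 0 l.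
Proof. by rewrite B_vec mxE; apply: eq_bigr => k _; rewrite mxE. Qed.

Lemma gram_unit : gram \in unitmx.
Proof.
rewrite unitmxE unitfE; apply/negP => /det0P [u unz uG].
have h : forall l : 'I_n, B (vec u) e`_l = 0 by move=> l; rewrite B_vec_e uG mxE.
have : B (vec u) (vec u) = 0.
  by rewrite {2}/vec (slin_sum (BlinR _)) big1 // => l _; rewrite h mulr0.
move/eqP; apply/negP; rewrite gt_eqF // hpos //.
by apply: contra unz => /eqP /vec_eq0 ->.
Qed.

Definition riesz (psi : V -> R) : V := vec ((\row_l psi e`_l) *m invmx gram).

Lemma rieszP (psi : V -> R) : (forall a x y, psi (a *: x + y) = a * psi x + psi y) ->
  forall y, B (riesz psi) y = psi y.
Proof.
move=> lp y; rewrite {2}(coord_vbasis (memvf y)) (slin_sum lp).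
rewrite {1}(coord_vbasis (memvf y)) (slin_sum (BlinR _)).
apply: eq_bigr => l _; congr (_ * _).
by rewrite /riesz B_vec_e mulmxKV ?gram_unit // mxE.
Qed.

Lemma riesz_lin (F : V -> V -> R) a x x' :
  (forall y, F (a *: x + x') y = a * F x y + F x' y) ->
  riesz (F (a *: x + x')) = a *: riesz (F x) + riesz (F x').
Proof.
move=> h; rewrite /riesz -vecZ -vecD scalemxAl -mulmxDl; congr (vec (_ *m _)).
by apply/rowP => l; rewrite !mxE h.
Qed.

Lemma schur_form (b : V -> V -> R) :
  (forall y a x x', b (a *: x + x') y = a * b x y + b x' y) ->
  (forall y a x x', b y (a *: x + x') = a * b y x + b y x') ->
  (forall z x y, b (br z x) y + b x (br z y) = 0) ->
  (exists x : V, x != 0) -> exists lam, forall x y, b x y = lam * B x y.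
Proof.
move=> bl br_ binv ex.
pose T x := riesz (b x).
have TP : forall x y, B (T x) y = b x y by move=> x y; apply: rieszP; apply: br_.
have lT : islin T by move=> a x x'; apply: riesz_lin => y; apply: bl.
have cT : forall z x, T (br z x) = br z (T x).
  move=> z x; apply/eqP; rewrite -subr_eq0; apply/eqP; apply: B_nondeg => y.
  rewrite (slinB (BlinL y)) TP.
  have := mk_inv2 hl hr ha hjac (T x) y z; rewrite TP => h.
  have := binv z x y; lra.
have [c Tc] := schur hl hr ha hpos hsimple lT cT ex.
by exists c => x y; rewrite -TP Tc mkZl.
Qed.
End Riesz.
Section G.
Variables (R : rcfType) (fT : vectType R) (br : fT -> fT -> fT) (m : nat).
Hypothesis hl : forall a x y z, br (a *: x + y) z = a *: br x z + br y z.
Hypothesis hr : forall a x y z, br z (a *: x + y) = a *: br z x + br z y.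
Hypothesis ha : forall x, br x x = 0.
Hypothesis hjac : forall x y z, br x (br y z) + br y (br z x) + br z (br x y) = 0.
Local Notation B := (mkilling br).
Local Notation g := (gT fT m).

Definition iota (i : 'I_m) (x : fT) : g := [ffun k => if k == i then x else 0].
Definition tens (a : 'I_m -> R) (x : fT) : g := [ffun k => a k *: x].

Lemma gbrE (X Y : g) i : gbr br X Y i = br (X i) (Y i). Proof. by rewrite /gbr ffunE. Qed.

Lemma gbr_linl : forall Y, islin (fun X : g => gbr br X Y).
Proof. by move=> Y a X X'; apply/ffunP => i; rewrite /gbr !ffunE hl. Qed.
Lemma gbr_linr : forall X : g, islin (gbr br X).
Proof. by move=> X a Y Y'; apply/ffunP => i; rewrite /gbr !ffunE hr. Qed.

Lemma iota_lin i : islin (iota i).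
Proof.
move=> a x y; apply/ffunP => k; rewrite !ffunE.
by case: (k == i); rewrite ?scaler0 ?addr0.
Qed.

Lemma diag_lin : islin (@diagf R fT m).
Proof. by move=> a x y; apply/ffunP => k; rewrite /diagf !ffunE. Qed.

Lemma sum_iota (X : g) : X = \sum_i iota i (X i).
Proof.
apply/ffunP => k; rewrite sum_ffunE (bigD1 k) //= big1 ?addr0; first by rewrite ffunE eqxx.
by move=> i ik; rewrite ffunE eq_sym (negPf ik).
Qed.

Lemma memh X : (X \in hsp fT m) <-> exists x, X = diagf m x.
Proof.
rewrite /hsp; split.
  by case/memv_imgP => u _ ->; exists u; rewrite (linfunP diag_lin).
by case=> x ->; rewrite -(linfunP diag_lin); apply: memv_img; rewrite memvf.
Qed.

Lemma gbr_diag z w : gbr br (diagf m z) (diagf m w) = diagf m (br z w).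
Proof. by apply/ffunP => k; rewrite /gbr /diagf !ffunE. Qed.

Lemma gbr_iota z i x : gbr br (diagf m z) (iota i x) = iota i (br z x).
Proof. by apply/ffunP => k; rewrite /gbr /diagf /iota !ffunE; case: (k == i); rewrite ?(br0r hr). Qed.

Lemma gbr_tens a b x y : gbr br (tens a x) (tens b y) = tens (fun i => a i * b i) (br x y).
Proof. by apply/ffunP => k; rewrite /gbr /tens !ffunE (brZl hl) (brZr hr) scalerA mulrC. Qed.

Lemma gkil_iE i (X Y : g) : gkil_i br i X Y = B (X i) (Y i).
Proof.
rewrite /gkil_i /gkil /mkilling; congr (- _).
pose h := fun w => br (X i) (br (Y i) w).
rewrite -(vtrace_ext (h := fun Z : g => iota i (h (Z i)))); last first.
  move=> Z; apply/ffunP => k; rewrite /gbr /gproj /iota !ffunE /h.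
  by case: eqP => [->|_] //; rewrite (br0l hl).
have l1 : islin (fun Z : g => h (Z i)).
  by move=> a Z Z'; rewrite /h !ffunE !hr.
rewrite (vtrace_cyc (iota_lin i) l1); apply: vtrace_ext => w.
by rewrite /h /iota ffunE eqxx.
Qed.
End G.
Section Classify.
Variables (R : rcfType) (m : nat) (c : 'I_m -> R) (M : 'I_m -> 'I_m -> R).
Local Notation Mv a l := (\sum_j M l j * a j).
Local Notation D a := (\sum_i c i * a i = 0).
Hypothesis hc1 : \sum_i c i = 1.
Hypothesis hMs : forall i j, M i j = M j i.
Hypothesis hM0 : forall i, \sum_j M i j = 0.
Hypothesis hpd : forall a : 'I_m -> R, D a -> (exists i, a i != 0) ->
  0 < \sum_i \sum_j M i j * a i * a j.
Hypothesis hnr : forall a b d : 'I_m -> R, D a -> D b -> D d ->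
  \sum_i \sum_j M i j * b i * (a i * d j - d i * a j) = 0.

Lemma sumd (F : 'I_m -> R) k : \sum_i F i * (i == k)%:R = F k.
Proof.
rewrite (bigD1 k) //= eqxx mulr1 big1 ?addr0 // => i ik.
by rewrite (negPf ik) mulr0.
Qed.

Lemma Pab_sym (a b : 'I_m -> R) : \sum_l b l * Mv a l = \sum_l a l * Mv b l.
Proof.
under eq_bigr => l _ do rewrite mulr_sumr.
under [RHS]eq_bigr => l _ do rewrite mulr_sumr.
rewrite exchange_big /=; apply: eq_bigr => i _; apply: eq_bigr => j _.
by rewrite hMs; ring.
Qed.

Lemma colsum i : \sum_j M j i = 0.
Proof. by rewrite -[RHS](hM0 i); apply: eq_bigr => j _; rewrite hMs. Qed.

Lemma W_formula (a b : 'I_m -> R) : D a -> D b -> forall k,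
  \sum_i M k i * (a i * b i) - b k * Mv a k = - (c k * \sum_l b l * Mv a l).
Proof.
move=> Da Db.
pose W k := \sum_i M k i * (a i * b i) - b k * Mv a k.
have h1 : forall d, D d -> \sum_l d l * W l = 0.
  move=> d Dd; rewrite -[RHS](hnr Da Db Dd).
  have E : \sum_i \sum_j M i j * b i * (a i * d j - d i * a j) =
    \sum_i \sum_j M i j * b i * a i * d j - \sum_i \sum_j M i j * b i * d i * a j.
    rewrite -sumrB; apply: eq_bigr => i _; rewrite -sumrB; apply: eq_bigr => j _; ring.
  rewrite E /W.
  under eq_bigr => l _ do rewrite mulrBr mulr_sumr.
  rewrite sumrB; congr (_ - _).
    rewrite exchange_big /=; apply: eq_bigr => i _; rewrite mulr_sumr.
    by apply: eq_bigr => j _; rewrite (hMs i j); ring.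
  apply: eq_bigr => i _; rewrite mulr_sumr; apply: eq_bigr => j _; ring.
have h2 : forall v : 'I_m -> R, \sum_l v l * W l = (\sum_i c i * v i) * \sum_l W l.
  move=> v; pose s := \sum_i c i * v i.
  have Dd : D (fun i => v i - s).
    under eq_bigr => i _ do rewrite mulrBr.
    by rewrite sumrB -mulr_suml hc1 mul1r subrr.
  have := h1 _ Dd; under eq_bigr => l _ do rewrite mulrBl.
  rewrite sumrB -mulr_sumr => /eqP; rewrite subr_eq0 => /eqP ->; by [].
have h3 : \sum_l W l = - \sum_l b l * Mv a l.
  rewrite /W sumrB exchange_big /= big1 ?add0r // => i _.
  by rewrite -mulr_suml colsum mul0r.
move=> k.
have e1 : \sum_l (l == k)%:R * W l = W k.
  by under eq_bigr => l _ do rewrite mulrC; exact: sumd.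
have e2 : \sum_i c i * (i == k)%:R = c k by exact: sumd.
by have := h2 (fun i => (i == k)%:R); rewrite e1 e2 h3 /W mulrN => ->.
Qed.

Lemma step1 (a b : 'I_m -> R) : D a -> D b -> forall l, b l * Mv a l = a l * Mv b l.
Proof.
move=> Da Db l.
have h1 := W_formula Da Db l; have h2 := W_formula Db Da l.
rewrite (Pab_sym b a) in h2.
have e : \sum_i M l i * (a i * b i) = \sum_i M l i * (b i * a i).
  by apply: eq_bigr => i _; rewrite [a i * _]mulrC.
rewrite e in h1; lra.
Qed.

Definition isdelta (j : 'I_m) := forall i, c i = (i == j)%:R.

Lemma quadE (a : 'I_m -> R) :
  \sum_i \sum_j M i j * a i * a j = \sum_i a i * Mv a i.
Proof.
apply: eq_bigr => i _; rewrite mulr_sumr; apply: eq_bigr => j _; ring.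
Qed.

Lemma Dd_notdelta l k : k != l -> D (fun i => c k * (i == l)%:R - c l * (i == k)%:R).
Proof.
move=> kl; under eq_bigr => i _ do rewrite mulrBr.
rewrite sumrB.
have e1 : \sum_i c i * (c k * (i == l)%:R) = c k * c l.
  by under eq_bigr => i _ do rewrite mulrCA; rewrite -mulr_sumr sumd.
have e2 : \sum_i c i * (c l * (i == k)%:R) = c l * c k.
  by under eq_bigr => i _ do rewrite mulrCA; rewrite -mulr_sumr sumd.
by rewrite e1 e2 mulrC subrr.
Qed.

Lemma notdelta_b l : ~ isdelta l -> exists b, D b /\ b l != 0.
Proof.
move=> nd; case: (boolP [exists k, (k != l) && (c k != 0)]).
  case/existsP => k /andP [kl ck].
  exists (fun i => c k * (i == l)%:R - c l * (i == k)%:R); split.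
    exact: Dd_notdelta.
  by rewrite eqxx [l == k]eq_sym (negPf kl) mulr1 mulr0 subr0.
move=> h; exfalso; apply: nd => i.
have z : forall k, k != l -> c k = 0.
  move=> k kl; apply/eqP; apply: contraNT h => ck; apply/existsP; exists k.
  by rewrite kl ck.
case: eqP => [->|il]; last by rewrite z //; apply/eqP.
rewrite -hc1 (bigD1 l) //= big1 ?addr0 // => k kl; exact: z.
Qed.

Lemma kappa_exists l : ~ isdelta l -> exists kl, forall a, D a -> Mv a l = kl * a l.
Proof.
case/notdelta_b => b [Db bl]; exists (Mv b l / b l) => a Da.
have := step1 Da Db l => h.
by apply: (mulfI bl); rewrite h; field.
Qed.

Lemma delta_D j l : isdelta j -> l != j -> D (fun i => (i == l)%:R).
Proof.
by move=> dj lj; rewrite sumd dj (negPf lj).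
Qed.

Lemma quad_delta l : \sum_i \sum_j M i j * (i == l)%:R * (j == l)%:R = M l l.
Proof.
under eq_bigr => i _ do rewrite (sumd (fun j => M i j * (i == l)%:R)).
exact: (sumd (fun i => M i l)).
Qed.

Lemma sq_delta (j t : 'I_m) (x : R) :
  ((t == j)%:R - x) ^+ 2 = (t == j)%:R * (1 - 2 * x) + x ^+ 2 :> R.
Proof. by case: (t == j) => /=; ring. Qed.

Lemma sqd (i l : 'I_m) : (i == l)%:R ^+ 2 = (i == l)%:R :> R.
Proof. by case: (i == l); rewrite ?expr1n ?expr0n. Qed.

Lemma classify (l0 : 'I_m) :
 (exists j, isdelta j /\ exists kap : 'I_m -> R, (forall l, l != j -> 0 < kap l) /\
     (forall a, D a -> forall l, l != j -> Mv a l = kap l * a l))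
 \/ (exists kap : 'I_m -> R, [/\ forall a, D a -> forall l, Mv a l = kap l * a l,
       forall l, kap l != 0, forall l, kap l = (\sum_i kap i) * c l &
       ((forall l, 0 < kap l) \/ exists j, [/\ kap j < 0, forall i, i != j -> 0 < kap i &
            \sum_i kap i < 0])]).
Proof.
case: (boolP [exists j, [forall i, c i == (i == j)%:R]]).
  case/existsP => j /forallP hj; have dj : isdelta j by move=> i; apply/eqP.
  left; exists j; split => //.
  have : forall l, exists kl, l != j -> forall a, D a -> Mv a l = kl * a l.
    move=> l; case: (eqVneq l j) => [->|lj]; first by exists 0.
    have ndl : ~ isdelta l.
      by move/(_ j) => h; move: (dj j); rewrite h eqxx [j == l]eq_sym (negPf lj) /= => /esym/eqP; rewrite oner_eq0.
    by case: (kappa_exists ndl) => kl hk; exists kl.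
  case/fin_all_exists => kap hk; exists kap; split; last first.
    by move=> a Da l lj; exact: hk.
  move=> l lj; have Dl := delta_D dj lj.
  have := hk l lj _ Dl; rewrite eqxx mulr1 sumd => <-.
  rewrite -(quad_delta l); apply: hpd => //; exists l; by rewrite eqxx oner_eq0.
move=> nex; right.
have nd : forall l, ~ isdelta l.
  move=> l dl; move/negP: nex; apply; apply/existsP; exists l; apply/forallP => i.
  by rewrite dl.
have /fin_all_exists [kap rel] : forall l, exists kl, forall a, D a -> Mv a l = kl * a l.
  by move=> l; apply: kappa_exists.
pose S := \sum_i kap i.
have kapD : forall a, D a -> \sum_l kap l * a l = 0.
  move=> a Da; under eq_bigr => l _ do rewrite -rel //.
  rewrite exchange_big /= big1 // => j _; by rewrite -mulr_suml colsum mul0r.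
have kapS : forall l, kap l = S * c l.
  move=> l; pose a := fun i => (i == l)%:R - c l.
  have Da : D a.
    rewrite /a; under eq_bigr => i _ do rewrite mulrBr.
    by rewrite sumrB sumd -mulr_suml hc1 mul1r subrr.
  have := kapD _ Da; rewrite /a; under eq_bigr => i _ do rewrite mulrBr.
  rewrite sumrB sumd -mulr_suml -/S => /eqP; rewrite subr_eq0 => /eqP ->.
  by rewrite mulrC.
have quad : forall a, D a -> \sum_i \sum_j M i j * a i * a j = \sum_i kap i * a i ^+ 2.
  move=> a Da; rewrite quadE; apply: eq_bigr => i _; rewrite rel //; ring.
have Snz : S != 0.
  apply/eqP => S0; have [b [Db bl0]] := notdelta_b (nd l0).
  have := hpd Db (ex_intro _ l0 bl0); rewrite quad // big1 ?ltxx // => i _.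
  by rewrite kapS S0 !mul0r.
have cnz : forall l, c l != 0.
  move=> l; apply/negP => /eqP cl0.
  have Dl : D (fun i => (i == l)%:R) by rewrite sumd cl0.
  have hl : (l == l)%:R != 0 :> R by rewrite eqxx oner_eq0.
  have := hpd Dl (ex_intro _ l hl); rewrite quad //.
  under eq_bigr => i _ do rewrite sqd.
  by rewrite sumd kapS cl0 mulr0 ltxx.
have knz : forall l, kap l != 0 by move=> l; rewrite kapS mulf_neq0.
have sqc : forall l, 0 < c l ^+ 2 by move=> l; rewrite exprn_even_gt0 ?cnz.
exists kap; split => //; first by move=> a Da l; exact: rel.
case: (boolP [forall l, 0 < kap l]) => [/forallP h|]; first by left.
move/forallPn => [j]; rewrite -leNgt => kj0.
have kj : kap j < 0 by rewrite lt_neqAle knz.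
right; exists j.
have pos : forall i, i != j -> 0 < kap i.
  move=> i ij; rewrite ltNge; apply/negP => ki0.
  have ki : kap i < 0 by rewrite lt_neqAle knz.
  have Da := Dd_notdelta ij.
  have anz : c i * (j == j)%:R - c j * (j == i)%:R != 0.
    by rewrite eqxx [j == i]eq_sym (negPf ij) mulr1 mulr0 subr0.
  have := hpd Da (ex_intro _ j anz); rewrite quad //.
  rewrite (bigD1 j) //= (bigD1 i) //= big1 ?addr0; last first.
    move=> t /andP [ti tj]; by rewrite (negPf ti) (negPf tj) !mulr0 subrr expr0n /= mulr0.
  rewrite !eqxx (eq_sym j i) (negPf ij).
  have h1 := sqc i; have h2 := sqc j.
  rewrite !mulr1 !mulr0 subr0 sub0r sqrrN => h.
  have : kap j * c i ^+ 2 + kap i * c j ^+ 2 < 0.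
    by rewrite -(addr0 0) ltrD // nmulr_rlt0.
  by move/(lt_trans h); rewrite ltxx.
split => //; rewrite ltNge; apply/negP => S0.
have Sp : 0 < S by rewrite lt_neqAle eq_sym Snz.
pose a := fun t => (t == j)%:R - c j.
have Da : D a.
  rewrite /a; under eq_bigr => i _ do rewrite mulrBr.
  by rewrite sumrB sumd -mulr_suml hc1 mul1r subrr.
have cj : c j < 0.
  by move: kj; rewrite kapS pmulr_rlt0.
have anz : a j != 0 by rewrite /a eqxx subr_eq0 eq_sym (lt_eqF (lt_trans cj ltr01)).
have := hpd Da (ex_intro _ j anz); rewrite quad //.
have e : \sum_i kap i * a i ^+ 2 = S * (c j - c j ^+ 2).
  rewrite /a; under eq_bigr => i _ do rewrite sq_delta kapS -mulrA.
  rewrite -mulr_sumr; congr (_ * _).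
  under eq_bigr => i _ do rewrite mulrDr mulrA.
  by rewrite big_split /= -mulr_suml sumd -mulr_suml hc1 mul1r; ring.
rewrite e => h.
have : S * (c j - c j ^+ 2) < 0.
  by rewrite pmulr_rlt0 //; have := sqc j; lra.
by move/(lt_trans h); rewrite ltxx.
Qed.
End Classify.
Lemma swap_eq (V : zmodType) (a b c d : V) : a + b = c + d -> a - c = d - b.
Proof. by move=> E; rewrite -[a](addrK b) E [c + d]addrC addrAC addrK. Qed.

Section Decomp.
Variables (R : rcfType) (fT : vectType R) (br : fT -> fT -> fT) (m : nat).
Hypothesis hl : forall a x y z, br (a *: x + y) z = a *: br x z + br y z.
Hypothesis hr : forall a x y z, br z (a *: x + y) = a *: br z x + br z y.
Hypothesis ha : forall x, br x x = 0.
Hypothesis hjac : forall x y z, br x (br y z) + br y (br z x) + br z (br x y) = 0.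
Hypothesis hpos : forall x, x != 0 -> 0 < mkilling br x x.
Hypothesis hsimple : forall I : {vspace fT},
   (forall x y, y \in I -> br x y \in I) -> I = 0%VS \/ I = fullv.
Variables (x1 y1 : fT).
Hypothesis hnab : br x1 y1 != 0.
Variable (i0 : 'I_m).
Local Notation B := (mkilling br).
Local Notation g := (gT fT m).
Local Notation h := (hsp fT m).
Local Notation diag := (@diagf R fT m).
Variables (p : {vspace g}) (ip : g -> g -> R).
Hypothesis hsum : (p + h)%VS = fullv.
Hypothesis hcap : (p :&: h)%VS = 0%VS.
Hypothesis hinv : forall Z X, Z \in h -> X \in p -> gbr br Z X \in p.
Hypothesis hsym : forall X Y, X \in p -> Y \in p -> ip X Y = ip Y X.
Hypothesis hlin : forall a X Y Z, X \in p -> Y \in p -> Z \in p ->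
          ip (a *: X + Y) Z = a * ip X Z + ip Y Z.
Hypothesis hposp : forall X, X \in p -> X != 0 -> 0 < ip X X.
Hypothesis hskew : forall Z X Y, Z \in h -> X \in p -> Y \in p ->
          ip (gbr br Z X) Y + ip X (gbr br Z Y) = 0.

Local Notation pp := (daddv_pi p h).
Local Notation ph := (daddv_pi h p).

Lemma x1nz : x1 != 0.
Proof. by apply: contra hnab => /eqP ->; rewrite (br0l hl). Qed.

Lemma dec X : pp X + ph X = X.
Proof. by apply: daddv_pi_add => //; rewrite hsum memvf. Qed.

Lemma uniqd P H : P \in p -> H \in h -> pp (P + H) = P /\ ph (P + H) = H.
Proof.
move=> Pp Hh; have e := dec (P + H).
have e2 : pp (P + H) - P = H - ph (P + H).
  exact: swap_eq.
have : pp (P + H) - P \in (p :&: h)%VS.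
  by rewrite memv_cap memvB ?memv_pi // e2 memvB ?memv_pi.
rewrite hcap memv0 => /eqP z; split; first by apply/eqP; rewrite -subr_eq0 z.
by move: z; rewrite e2 => /eqP; rewrite subr_eq0 => /eqP.
Qed.

Definition phi X := ph X i0.

Lemma diag_i0 x : diag x i0 = x. Proof. by rewrite /diagf ffunE. Qed.
Lemma diagE x i : diag x i = x. Proof. by rewrite /diagf ffunE. Qed.

Lemma phE X : ph X = diag (phi X).
Proof.
have /memh [x e] : ph X \in h by exact: memv_pi.
by rewrite /phi e diag_i0.
Qed.

Lemma memh_diag z : diag z \in h. Proof. by apply/memh; exists z. Qed.

Lemma equiv z X : pp (gbr br (diag z) X) = gbr br (diag z) (pp X) /\
                  ph (gbr br (diag z) X) = gbr br (diag z) (ph X).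
Proof.
have -> : gbr br (diag z) X = gbr br (diag z) (pp X) + gbr br (diag z) (ph X).
  by rewrite -(linD (gbr_linr hr _)) dec.
apply: uniqd; first by apply: hinv; rewrite ?memh_diag ?memv_pi.
by rewrite phE gbr_diag memh_diag.
Qed.

Lemma phi_lin : islin phi.
Proof. by move=> a X Y; rewrite /phi linearP /= !ffunE. Qed.

Lemma phi_diag x : phi (diag x) = x.
Proof.
have := uniqd (mem0v p) (memh_diag x); rewrite add0r /phi => -[_ ->].
exact: diag_i0.
Qed.

Lemma phi_equiv z X : phi (gbr br (diag z) X) = br z (phi X).
Proof. by rewrite /phi (proj2 (equiv z X)) gbrE diag_i0. Qed.

Lemma coefs : exists c : 'I_m -> R, forall X, phi X = \sum_i c i *: X i.
Proof.
have : forall i, exists ci, forall x, phi (iota i x) = ci *: x.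
  move=> i; apply: (schur hl hr ha hpos hsimple); last by exists x1; exact: x1nz.
    by move=> a x y; rewrite (iota_lin i) phi_lin.
  by move=> x y; rewrite -(gbr_iota hr) phi_equiv.
case/fin_all_exists => c hc; exists c => X.
by rewrite {1}(sum_iota X) (linsum phi_lin); apply: eq_bigr => i _; rewrite hc.
Qed.

Lemma memp X : (X \in p) = (phi X == 0).
Proof.
apply/idP/idP.
  move=> Xp; have := uniqd Xp (mem0v h); rewrite addr0 /phi => -[_ ->].
  by rewrite ffunE.
move=> /eqP z; rewrite -(dec X) phE z.
have -> : diag 0 = 0 by apply/ffunP => k; rewrite !ffunE.
by rewrite addr0 memv_pi.
Qed.

Definition ipt X Y := ip (pp X) (pp Y).

Lemma ip0 Y : Y \in p -> ip 0 Y = 0.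
Proof.
move=> Yp; have := hlin 1 (mem0v p) (mem0v p) Yp; rewrite scale1r addr0 mul1r.
by move/(congr1 (fun t => t - ip 0 Y)); rewrite subrr addrK => <-.
Qed.

Lemma ipt_linl Y : forall a X X', ipt (a *: X + X') Y = a * ipt X Y + ipt X' Y.
Proof. by move=> a X X'; rewrite /ipt linearP /= hlin ?memv_pi. Qed.

Lemma ipt_sym X Y : ipt X Y = ipt Y X.
Proof. by rewrite /ipt hsym ?memv_pi. Qed.

Lemma ipt_linr Y : forall a X X', ipt Y (a *: X + X') = a * ipt Y X + ipt Y X'.
Proof. by move=> a X X'; rewrite !(ipt_sym Y) ipt_linl. Qed.

Lemma ipt_p X Y : X \in p -> Y \in p -> ipt X Y = ip X Y.
Proof. by move=> Xp Yp; rewrite /ipt !daddv_pi_id. Qed.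

Lemma pp_diag z : pp (diag z) = 0.
Proof. by have := uniqd (mem0v p) (memh_diag z); rewrite add0r => -[-> _]. Qed.

Lemma ipt_diag z Y : ipt (diag z) Y = 0.
Proof. by rewrite /ipt pp_diag ip0 ?memv_pi. Qed.

Lemma ipt_inv z X Y : ipt (gbr br (diag z) X) Y + ipt X (gbr br (diag z) Y) = 0.
Proof.
by rewrite /ipt !(proj1 (equiv _ _)) hskew ?memh_diag ?memv_pi.
Qed.

Lemma Mform : exists M : 'I_m -> 'I_m -> R,
  forall i j x y, ipt (iota i x) (iota j y) = M i j * B x y.
Proof.
have : forall ij : 'I_m * 'I_m, exists l,
    forall x y, ipt (iota ij.1 x) (iota ij.2 y) = l * B x y.
  move=> [i j]; apply: (schur_form hl hr ha hjac hpos hsimple).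
  - by move=> y a x x'; rewrite (iota_lin i) ipt_linl.
  - by move=> y a x x'; rewrite (iota_lin j) ipt_linr.
  - by move=> z x y; rewrite -!(gbr_iota hr) ipt_inv.
  - by exists x1; exact: x1nz.
case/fin_all_exists => M0 hM0; exists (fun i j => M0 (i, j)) => i j x y.
exact: (hM0 (i, j)).
Qed.

Lemma Bxx_pos : 0 < B x1 x1. Proof. exact: hpos x1nz. Qed.

Section WithM.
Variables (M : 'I_m -> 'I_m -> R) (c : 'I_m -> R).
Hypothesis hM : forall i j x y, ipt (iota i x) (iota j y) = M i j * B x y.
Hypothesis hc : forall X, phi X = \sum_i c i *: X i.

Lemma ipt_expand X Y : ipt X Y = \sum_i \sum_j M i j * B (X i) (Y j).
Proof.
rewrite {1}(sum_iota X) (slin_sum1 (ipt_linl Y)); apply: eq_bigr => i _.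
rewrite {1}(sum_iota Y) (slin_sum1 (ipt_linr _)); apply: eq_bigr => j _.
exact: hM.
Qed.

Lemma M_sym i j : M i j = M j i.
Proof.
apply: (mulIf (lt0r_neq0 Bxx_pos)); rewrite -!hM; exact: ipt_sym.
Qed.

Lemma M_row i : \sum_j M i j = 0.
Proof.
apply: (mulIf (lt0r_neq0 Bxx_pos)); rewrite mul0r mulr_suml.
have := ipt_diag x1 (iota i x1); rewrite ipt_sym => h0; rewrite -[RHS]h0.
rewrite {1}(sum_iota (diag x1)) (slin_sum1 (ipt_linr _)); apply: eq_bigr => j _.
by rewrite hM /diagf ffunE.
Qed.

Lemma c_sum : \sum_i c i = 1.
Proof.
have := phi_diag x1; rewrite hc.
under eq_bigr => i _ do rewrite /diagf ffunE.
rewrite -scaler_suml => /eqP; rewrite -subr_eq0 -{2}(scale1r x1) -scalerBl.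
by rewrite scaler_eq0 (negPf x1nz) orbF subr_eq0 => /eqP.
Qed.

Lemma memp_c X : (X \in p) = (\sum_i c i *: X i == 0).
Proof. by rewrite memp hc. Qed.

Lemma tens_p a x : \sum_i c i * a i = 0 -> tens a x \in p.
Proof.
move=> Da; rewrite memp_c; under eq_bigr => i _ do rewrite /tens ffunE scalerA.
by rewrite -scaler_suml Da scale0r.
Qed.

Lemma ipt_tens a b x y :
  ipt (tens a x) (tens b y) = (\sum_i \sum_j M i j * a i * b j) * B x y.
Proof.
rewrite ipt_expand mulr_suml; apply: eq_bigr => i _; rewrite mulr_suml.
apply: eq_bigr => j _.
by rewrite /tens !ffunE (mkZl hl) (mkZr hl hr); ring.
Qed.

Hypothesis hnr : nat_red_pair br p ip.

Lemma nr_ipt X Y : X \in p -> Y \in p -> ipt (gbr br X Y) X = 0.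
Proof.
move=> Xp Yp; rewrite /ipt (daddv_pi_id hcap Xp).
apply: (hnr Xp Yp (memv_pi _ _ _)).
have e := dec (gbr br X Y).
have -> : gbr br X Y - pp (gbr br X Y) = ph (gbr br X Y).
  by rewrite -{1}e addrC addKr.
exact: memv_pi.
Qed.

Lemma nr_pol X Y Z : X \in p -> Y \in p -> Z \in p ->
  ipt (gbr br X Y) Z + ipt (gbr br Z Y) X = 0.
Proof.
move=> Xp Yp Zp; have := nr_ipt (memvD Xp Zp) Yp.
rewrite (linD (gbr_linl hl Y)) (slinD (ipt_linl _)) !(slinD (ipt_linr _)).
by rewrite (nr_ipt Xp Yp) (nr_ipt Zp Yp); lra.
Qed.

Lemma hpd_s (a : 'I_m -> R) : \sum_i c i * a i = 0 -> (exists i, a i != 0) ->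
  0 < \sum_i \sum_j M i j * a i * a j.
Proof.
move=> Da [i ai]; have Xp := tens_p x1 Da.
have Xnz : tens a x1 != 0.
  apply/eqP => /ffunP /(_ i); rewrite !ffunE => /eqP.
  by rewrite scaler_eq0 (negPf ai) (negPf x1nz).
have := hposp Xp Xnz; rewrite -ipt_p // ipt_tens pmulr_lgt0 //.
exact: Bxx_pos.
Qed.

Lemma hnr_s (a b d : 'I_m -> R) : \sum_i c i * a i = 0 -> \sum_i c i * b i = 0 ->
  \sum_i c i * d i = 0 ->
  \sum_i \sum_j M i j * b i * (a i * d j - d i * a j) = 0.
Proof.
move=> Da Db Dd; pose w := br x1 y1.
have := nr_pol (tens_p x1 Da) (tens_p y1 Db) (tens_p w Dd).
rewrite !(gbr_tens hl hr) !ipt_tens.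
have -> : B (br w y1) x1 = - B w w.
  by rewrite (mk_inv hl hr ha hjac) (br_anti hl hr ha y1 x1) (mkNr hl hr).
have wp : 0 < B w w by apply: hpos.
have -> : B (br x1 y1) w = B w w by [].
move=> H.
have : ((\sum_i \sum_j M i j * (a i * b i) * d j) -
        (\sum_i \sum_j M i j * (d i * b i) * a j)) * B w w = 0.
  by rewrite mulrBl; move: H; set u := B w w; lra.
move/eqP; rewrite mulf_eq0 (gt_eqF wp) orbF => /eqP e.
rewrite -[RHS]e -sumrB; apply: eq_bigr => i _; rewrite -sumrB.
apply: eq_bigr => j _; ring.
Qed.

Lemma coord_eq (u v : fT) :
  (forall k, coord (vbasis fullv) k u = coord (vbasis fullv) k v) -> u = v.
Proof. by move=> h; rewrite (expand u) (expand v); apply: eq_bigr => k _; rewrite h. Qed.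

Lemma vec_rel l kl : (forall a, \sum_i c i * a i = 0 -> \sum_j M l j * a j = kl * a l) ->
  forall Y, Y \in p -> \sum_j M l j *: Y j = kl *: Y l.
Proof.
move=> hk Y Yp; apply: coord_eq => k; rewrite linear_sum linearZ /=.
pose a := fun j => coord (vbasis (fullv : {vspace fT})) k (Y j).
have Da : \sum_i c i * a i = 0.
  move: Yp; rewrite memp_c => /eqP e.
  have := congr1 (coord (vbasis (fullv : {vspace fT})) k) e.
  rewrite linear_sum linear0 /= => h; rewrite -[RHS]h; apply: eq_bigr => i _; by rewrite linearZ.
have := hk a Da; rewrite /a => <-; apply: eq_bigr => j _; by rewrite linearZ.
Qed.

Lemma ip_expand2 X Y : X \in p -> Y \in p ->
  ip X Y = \sum_i B (X i) (\sum_j M i j *: Y j).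
Proof.
move=> Xp Yp; rewrite -ipt_p // ipt_expand; apply: eq_bigr => i _.
by rewrite (slin_sum (BlinR hl hr _)).
Qed.

Lemma sum_delta_vec (X : g) j : \sum_i (i == j)%:R *: X i = X j.
Proof.
rewrite (bigD1 j) //= eqxx scale1r big1 ?addr0 // => i ij.
by rewrite (negPf ij) scale0r.
Qed.

Lemma fwd : case_a br p ip \/ case_b br p ip.
Proof.
case: (classify c_sum M_sym M_row hpd_s hnr_s i0).
  move=> [j [dj [kap [kpos krel]]]]; left; exists j, kap; split => //.
    move=> X; rewrite memp_c.
    by under eq_bigr => i _ do rewrite dj; rewrite sum_delta_vec.
  move=> X Y Xp Yp; rewrite ip_expand2 // (bigD1 j) //=.
  have Xj : X j = 0 by apply/eqP; move: Xp; rewrite memp_c; under eq_bigr => i _ do rewrite dj; rewrite sum_delta_vec.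
  rewrite Xj (mk0l hl) add0r; apply: eq_bigr => i ij.
  by rewrite (vec_rel (fun a Da => krel a Da i ij) Yp) (mkZr hl hr) (gkil_iE hl hr).
move=> [kap [krel knz kS ksign]]; right; exists kap; split => //.
- have Qd : forall X z, Qform br kap X (diag z) =
      (\sum_i kap i) * B (\sum_i c i *: X i) z.
    move=> X z; rewrite /Qform (slin_sum (BlinL hl z)) mulr_sumr.
    apply: eq_bigr => i _; rewrite (gkil_iE hl hr) diagE kS; ring.
  move=> X; split.
    move=> Xp Z /memh [z ->]; rewrite Qd.
    by move: Xp; rewrite memp_c => /eqP ->; rewrite (mk0l hl) mulr0.
  move=> hQ; rewrite memp_c; apply/eqP; apply: (B_nondeg hpos) => y.
  have := hQ _ (memh_diag y); rewrite Qd => /eqP; rewrite mulf_eq0 => /orP [|/eqP //].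
  have [l _] : exists l : 'I_m, true by exists i0.
  move=> /eqP S0; move: (knz l); by rewrite kS S0 mul0r eqxx.
- move=> X Y Xp Yp; rewrite ip_expand2 // /Qform; apply: eq_bigr => i _.
  by rewrite (vec_rel (fun a Da => krel a Da i) Yp) (mkZr hl hr) (gkil_iE hl hr).
Qed.
End WithM.

Lemma mk_brxx x y : B (br x y) x = 0.
Proof.
have h1 := mk_inv hl hr ha hjac x y x.
rewrite (br_anti hl hr ha y x) (mkNr hl hr) (mk_sym hr x) in h1; lra.
Qed.

Lemma QformE alpha (U V : g) : Qform br alpha U V = \sum_i alpha i * B (U i) (V i).
Proof. by apply: eq_bigr => i _; rewrite (gkil_iE hl hr). Qed.

Lemma bwd : case_a br p ip \/ case_b br p ip -> nat_red_pair br p ip.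
Proof.
move=> [[j [beta [hm hb hip]]] | [alpha [anz hm hip hs]]] X Y W Xp Yp Wp hW.
  have Xj : X j = 0 by apply/eqP; rewrite -hm.
  have Yj : Y j = 0 by apply/eqP; rewrite -hm.
  have Gp : gbr br X Y \in p by rewrite hm gbrE Xj Yj (br0l hl).
  have eW : W = gbr br X Y.
    have : gbr br X Y - W \in (p :&: h)%VS by rewrite memv_cap memvB.
    by rewrite hcap memv0 subr_eq0 => /eqP ->.
  rewrite hip // big1 // => i _; rewrite (gkil_iE hl hr) eW gbrE mk_brxx mulr0.
  done.
rewrite hip //.
have eW : W = gbr br X Y - (gbr br X Y - W) by rewrite opprB addrC subrK.
rewrite eW !QformE.
have evl : forall i, islin (fun U : g => U i) by move=> i a U V; rewrite !ffunE.
under eq_bigr => i _ do rewrite (linB (evl i)) (mkDl hl) (mkNl hl) mulrDr.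
rewrite big_split /= big1 ?add0r; last first.
  by move=> i _; rewrite gbrE mk_brxx mulr0.
have := (proj1 (hm X) Xp _ hW); rewrite QformE => h0.
rewrite -[RHS]oppr0 -[in RHS]h0 -sumrN; apply: eq_bigr => i _.
by rewrite (mk_sym hr) mulrN.
Qed.

Lemma fwd_full : nat_red_pair br p ip -> case_a br p ip \/ case_b br p ip.
Proof.
move=> hnr; have [c hc] := coefs; have [M hM] := Mform.
exact: (fwd hM hc hnr).
Qed.
End Decomp.

Unset Implicit Arguments.

Theorem theorem1 (R : rcfType) (fT : vectType R) (br : fT -> fT -> fT)
    (m : nat) (hm : (2 <= m)%N) (hf : compact_simple_lie br)
    (p0 : {vspace gT fT m}) (ip0 : gT fT m -> gT fT m -> R)
    (hp0 : metric_pair br p0 ip0) :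
  naturally_reductive br p0 ip0 <->
  exists (p : {vspace gT fT m}) (ip : gT fT m -> gT fT m -> R),
    [/\ metric_pair br p ip, same_metric p0 ip0 p ip &
        case_a br p ip \/ case_b br p ip].
Proof.
case: hf => hl [hr [ha [hjac [hpos [[x1 [y1 hnab]] hsimple]]]]].
have i0 : 'I_m := Ordinal (ltnW hm).
split.
  case=> p [ip [mp sm nr]]; exists p, ip; split => //.
  case: (mp) => hsum [hcap [hinv [hsym [hlin [hposp hskew]]]]].
  exact: (fwd_full hl hr ha hjac hpos hsimple hnab i0 hsum hcap hinv hsym hlin hposp hskew nr).
case=> p [ip [mp sm cab]]; exists p, ip; split => //.
case: (mp) => hsum [hcap _].
exact: (bwd hl hr ha hjac hcap cab).
Qed.
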